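(* Let $(\mathbf d_n)$ be a family of degree sequences and $v_n\in[n]$. Assume, as $n\to\infty$, \[\sigma^2(\mathbf d_n)=o\Big(\frac{n}{(\log n)^3}\Big),\quad \sigma^2(\mathbf d_n)=\omega\Big(\frac{\log n}{n^{1/3}}\Big),\quad \Delta(\mathbf d_n)=o\Big(\sqrt{\frac{n\sigma^2(\mathbf d_n)}{(\log n)^3}}\Big).\] Then $\lim_{n\to\infty}\mathbb P(\mathfrak t_n(v_n)=0)=0$.
   Context: A degree sequence is $\mathbf d_n=(d_{n,1},\ldots,d_{n,n})\in\mathbb N_0^n$ with $\sum_j d_{n,j}=n$. Let $\mathfrak F(\mathbf d_n)=\{f:[n]\to[n]: |f^{-1}(\{i\})|=d_{n,i}\ \forall i\}$ and $F$ uniform on $\mathfrak F(\mathbf d_n)$. For $f:V\to V$, $v\in V$: six-length $\mathfrak s_f(v)=\min\{k\in\mathbb N: f^{(k)}(v)\in\{f^{(j)}(v):0\le j\le k-1\}\}$; tail-length $\mathfrak t_f(v)$ is the unique integer with $0\le\mathfrak t_f(v)<\mathfrak s_f(v)$ and $f^{(\mathfrak s_f(v))}(v)=f^{(\mathfrak t_f(v))}(v)$. $\mathfrak t_n(v)=\mathfrak t_F(v)$. $\Delta(\mathbf d_n)=\max_j d_{n,j}$, $\sigma^2(\mathbf d_n)=\frac1n\sum_j d_{n,j}^2-1$. $a_n=\omega(b_n)$ means $b_n=o(a_n)$. *)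

(* Defs.v *)
From mathcomp Require Import all_boot.
From Stdlib Require Import Reals.

Set Implicit Arguments.
Unset Strict Implicit.
Unset Printing Implicit Defensive.

(* six-length: s_f(v) = min { k >= 1 : f^(k)(v) \in {f^(j)(v) : 0 <= j <= k-1} }.
   On a finite type such a k exists with k <= #|T| (pigeonhole), so we search
   k in [1, #|T|]; [find] returns the 0-based position, hence the [.+1]. *)
Definition six_len (T : finType) (f : T -> T) (v : T) : nat :=
  (find (fun k => iter k f v \in [seq iter j f v | j <- iota 0 k])
        (iota 1 #|T|)).+1.

Definition tail_len (T : finType) (f : T -> T) (v : T) : nat :=
  index (iter (six_len f v) f v) [seq iter j f v | j <- iota 0 (six_len f v)].

Definition has_degrees (n : nat) (d : 'I_n -> nat) (f : {ffun 'I_n -> 'I_n}) : bool :=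
  [forall i, #|[pred j | f j == i]| == d i].

Definition is_degree_seq (n : nat) (d : 'I_n -> nat) : Prop :=
  (\sum_(j < n) d j)%N = n.

(* P(t_n(v) = 0) for F uniform on F(d) *)
Definition prob_tail0 (n : nat) (d : 'I_n -> nat) (v : 'I_n) : R :=
  Rdiv (INR #|[pred f : {ffun 'I_n -> 'I_n} | has_degrees d f && (tail_len f v == 0%N)]|)
       (INR #|[pred f : {ffun 'I_n -> 'I_n} | has_degrees d f]|).

Definition Delta_max (n : nat) (d : 'I_n -> nat) : nat := (\max_(j < n) d j)%N.

Definition sigma_sq (n : nat) (d : 'I_n -> nat) : R :=
  Rminus (Rdiv (INR (\sum_(j < n) d j ^ 2)%N) (INR n)) 1.

Definition little_o (a b : nat -> R) : Prop :=
  forall eps : R, Rlt 0 eps -> exists N : nat, forall n : nat, (N <= n)%coq_nat ->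
    Rle (Rabs (a n)) (Rmult eps (Rabs (b n))).

Definition little_omega (a b : nat -> R) : Prop := little_o b a.

(* Main.v *)
Require Import Defs.
From mathcomp Require Import all_boot.
From Stdlib Require Import Reals.
From Stdlib Require Import Lra Lia ZArith.
From mathcomp Require Import all_boot zify.

Set Implicit Arguments.
Unset Strict Implicit.
Unset Printing Implicit Defensive.

Section TSum.
Variables (n : nat) (d : 'I_n -> nat).

Fixpoint Tw (j : nat) (A : {set 'I_n}) : nat :=
  if j is j'.+1 then \sum_(x in A) d x * Tw j' (A :\ x) else 1.

Lemma TwS j A : Tw j.+1 A = \sum_(x in A) d x * Tw j (A :\ x).
Proof. by []. Qed.
Lemma Tw0 A : Tw 0 A = 1. Proof. by []. Qed.
Arguments Tw : simpl never.

Definition Dw (A : {set 'I_n}) := \sum_(x in A) d x.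

Lemma Tw_rem j (A : {set 'I_n}) x : x \in A ->
  Tw j.+1 A = Tw j.+1 (A :\ x) + j.+1 * d x * Tw j (A :\ x).
Proof.
elim: j A x => [|j IH] A x xA.
  rewrite TwS Tw0 (bigD1 x xA) /= addnC !muln1 mul1n; congr (_ + _).
  rewrite TwS; apply: eq_big => [y|y _]; first by rewrite in_setD1 andbC.
  by rewrite Tw0.
rewrite TwS (bigD1 x xA) /=.
rewrite (eq_bigl (fun y => y \in A :\ x)); last by move=> y; rewrite in_setD1 andbC.
rewrite (eq_bigr (fun y => d y * Tw j.+1 ((A :\ x) :\ y) + j.+1 * d x * (d y * Tw j ((A :\ x) :\ y)))); last first.
  move=> y yAx.
  have xAy : x \in A :\ y.
    by move: yAx; rewrite !in_setD1 xA andbT eq_sym => /andP[].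
  rewrite (IH _ _ xAy) mulnDr; congr (_ + _).
    by rewrite setDDl setUC -setDDl.
  by rewrite [in RHS]mulnCA; congr (_ * _); rewrite setDDl setUC -setDDl.
rewrite big_split /= -big_distrr /=.
rewrite [Tw j.+2 (A :\ x)]TwS [Tw j.+1 (A :\ x)]TwS.
set a := \sum_(y in _) _ * Tw j.+1 _; set b := \sum_(y in _) _.
lia.
Qed.

Lemma Tw_mono j (A : {set 'I_n}) x : Tw j (A :\ x) <= Tw j A.
Proof.
case xA: (x \in A); last first.
  by rewrite (_ : A :\ x = A) //; apply/setP => y; rewrite in_setD1; case: eqP => // ->; rewrite xA.
case: j => [|j] //; rewrite (Tw_rem j xA); exact: leq_addr.
Qed.

Lemma Dw_rem (A : {set 'I_n}) x : Dw (A :\ x) <= Dw A.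
Proof.
case xA: (x \in A); last first.
  by rewrite (_ : A :\ x = A) //; apply/setP => y; rewrite in_setD1; case: eqP => // ->; rewrite xA.
by rewrite /Dw [X in _ <= X](big_setD1 _ xA) leq_addl.
Qed.

Lemma Tw_le_D j (A : {set 'I_n}) : Tw j.+1 A <= Dw A * Tw j A.
Proof.
rewrite TwS /Dw big_distrl /=; apply: leq_sum => x _; rewrite leq_mul2l Tw_mono orbT //.
Qed.

Lemma Tw_R2 j (A : {set 'I_n}) x : x \in A ->
  Tw j.+1 A <= Tw j (A :\ x) * (Dw A + j.+1 * d x).
Proof.
move=> xA; rewrite (Tw_rem j xA) mulnDr.
apply: leq_add; last by rewrite mulnC.
rewrite mulnC; apply: leq_trans (Tw_le_D _ _) _.
by rewrite leq_mul2r Dw_rem orbT.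
Qed.

Lemma Tw_R1 j (A : {set 'I_n}) :
  Tw j.+2 A + j.+1 * \sum_(x in A) d x ^ 2 * Tw j (A :\ x) = Dw A * Tw j.+1 A.
Proof.
rewrite [Tw j.+2 A]TwS /Dw big_distrl big_distrr /= -big_split /=.
apply: eq_bigr => x xA.
rewrite (Tw_rem j xA); lia.
Qed.

End TSum.

Lemma cardP_sum (T : finType) (P : pred T) : #|[pred z | P z]| = \sum_z (P z : nat).
Proof. rewrite -sum1_card big_mkcond /=; apply: eq_bigr => z _; rewrite unfold_in /=; by case: (P z). Qed.

Section Swap.
Variables (n : nat) (d : 'I_n -> nat).
Notation FT := {ffun 'I_n -> 'I_n}.

Definition sw (x x' z : 'I_n) := if z == x then x' else if z == x' then x else z.
Lemma sw_inv x x' z : sw x x' (sw x x' z) = z.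
Proof.
rewrite /sw; case: (eqVneq z x) => [->|zx].
  rewrite eqxx; case: (eqVneq x' x) => [->|]; by rewrite ?eqxx.
case: (eqVneq z x') => [->|zx']; first by rewrite eqxx.
by rewrite (negbTE zx) (negbTE zx').
Qed.
Lemma sw_inj x x' : injective (sw x x').
Proof. exact: (can_inj (sw_inv x x')). Qed.

Definition swf (f : FT) x x' : FT := [ffun z => f (sw x x' z)].
Lemma swf_inv f x x' : swf (swf f x x') x x' = f.
Proof. by apply/ffunP => z; rewrite !ffunE sw_inv. Qed.

Lemma swf_deg f x x' : has_degrees d f -> has_degrees d (swf f x x').
Proof.
move=> /forallP H; apply/forallP => i; rewrite -(eqP (H i)).
rewrite !cardP_sum (reindex_inj (@sw_inj x x')) /=.
by apply/eqP; apply: eq_bigr => z _; rewrite ffunE sw_inv.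
Qed.

Definition good (B : pred FT) (X Y : {set 'I_n}) :=
  [/\ (forall f, B f -> has_degrees d f),
      (forall f x x', x \notin X -> x' \notin X -> B f -> B (swf f x x')) &
      (forall f x, B f -> x \in X -> f x \in Y)].

Lemma swap_le B X Y x x' y : good B X Y -> x \notin X -> x' \notin X ->
  #|[pred f | B f && (f x == y)]| <= #|[pred f | B f && (f x' == y)]|.
Proof.
case=> _ Hsw _ xX x'X.
rewrite !cardP_sum [X in _ <= X](@reindex_inj _ _ _ _ (fun f => swf f x x')) /=; last exact: (@can_inj _ _ (fun f => swf f x x') (fun f => swf f x x') (fun f => @swf_inv f x x')).
apply: leq_sum => f _; case/boolP: (B f && (f x == y)) => //= /andP[Bf /eqP fx].
rewrite Hsw //= ffunE /sw eqxx; case: (eqVneq x' x) => [->|]; by rewrite fx eqxx.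
Qed.

Lemma swap_eq B X Y x x' y : good B X Y -> x \notin X -> x' \notin X ->
  #|[pred f | B f && (f x == y)]| = #|[pred f | B f && (f x' == y)]|.
Proof. by move=> g xX x'X; apply/eqP; rewrite eqn_leq !(swap_le _ g). Qed.

Lemma swap_count B X Y x y : good B X Y -> x \notin X -> y \notin Y ->
  #|[pred f | B f && (f x == y)]| * #|~: X| = #|[pred f | B f]| * d y.
Proof.
move=> g xX yY.
have -> : #|[pred f | B f && (f x == y)]| * #|~: X| =
          \sum_(x' in ~: X) #|[pred f | B f && (f x' == y)]|.
  rewrite -sum1_card big_distrr /= muln1; apply: eq_bigr => x'; rewrite inE => x'X.
  exact: swap_eq g xX x'X.
under eq_bigr do rewrite cardP_sum.
rewrite exchange_big /= cardP_sum big_distrl /=.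
apply: eq_bigr => f _.
case Bf: (B f); last by rewrite big1.
case: g => Hd _ HY.
move/forallP: (Hd f Bf) => /(_ y) /eqP <-; rewrite cardP_sum mul1n.
rewrite [RHS](bigID (fun z => z \in ~: X)) /= [X in _ = _ + X]big1 ?addn0 //.
move=> z; rewrite inE negbK => zX; apply/eqP; rewrite eqb0; apply/negP => /eqP fz.
by move: (HY f z Bf zX); rewrite fz (negbTE yY).
Qed.

End Swap.

Section Walk.
Variables (n : nat) (d : 'I_n -> nat) (v : 'I_n).
Notation FT := {ffun 'I_n -> 'I_n}.

Fixpoint wc (j : nat) (f : FT) (u : 'I_n) (W : {set 'I_n}) : bool :=
  if j is j'.+1 then (f u \notin W) && wc j' f (f u) (f u |: W) else f u == v.

Lemma sum_ifeq (A : {set 'I_n}) a c :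
  \sum_(y in A) (if y == a then c else 0) = if a \in A then c else 0.
Proof.
rewrite -big_mkcondr /=; case aA: (a \in A).
  by rewrite (big_pred1 a) // => y /=; case: (eqVneq y a) => [->|]; rewrite ?aA ?andbF.
by rewrite big_pred0 // => y /=; case: (eqVneq y a) => [->|]; rewrite ?aA ?andbF.
Qed.

Lemma setC_U1 (X : {set 'I_n}) u : ~: (u |: X) = (~: X) :\ u.
Proof. by apply/setP => z; rewrite !inE negb_or andbC. Qed.

Lemma walk_count j : forall (B : pred FT) X Y u W,
  good d B X Y -> u \notin X -> W = u |: X -> Y \subset W -> v \in W -> v \notin Y ->
  #|[pred f | B f && wc j f u W]| * #|~: X| ^_ j.+1 =
  #|[pred f | B f]| * d v * Tw d j (~: W).
Proof.
elim: j => [|j IH] B X Y u W g uX eW YW vW vY.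
  by rewrite ffactn1 Tw0 muln1 /=; apply: swap_count g uX vY.
have split : #|[pred f | B f && wc j.+1 f u W]| =
   \sum_(y in ~: W) #|[pred f | (B f && (f u == y)) && wc j f y (y |: W)]|.
  under [RHS]eq_bigr do rewrite cardP_sum.
  rewrite exchange_big /= cardP_sum; apply: eq_bigr => f _.
  rewrite (eq_bigr (fun y => if y == f u then ((B f && wc j f (f u) (f u |: W)) : nat) else 0)).
    by rewrite sum_ifeq inE; case: (B f); case: (f u \in W).
  move=> y _; case: (eqVneq y (f u)) => [->|yfu]; first by rewrite andbT.
  by rewrite andbF.
rewrite split big_distrl /= ffactnS.
have cX : #|~: (u |: X)| = #|~: X|.-1.
  by rewrite setC_U1 (cardsD1 u (~: X)) inE uX.
rewrite (eq_bigr (fun y => #|[pred f | B f]| * d v * (d y * Tw d j (~: W :\ y)))); last first.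
  move=> y; rewrite inE => yW.
  set By := [pred f | B f && (f u == y)].
  have gy : good d By (u |: X) (y |: Y).
    case: g => H1 H2 H3; split.
    - by move=> f /andP[/H1].
    - move=> f x x'; rewrite !inE !negb_or => /andP[xu xX] /andP[x'u x'X] /andP[Bf fu].
      by rewrite /By /= H2 //= ffunE /sw [u == x]eq_sym (negbTE xu) [u == x']eq_sym (negbTE x'u).
    - move=> f x /andP[Bf /eqP fu]; rewrite !inE => /orP[/eqP ->|xX]; first by rewrite fu eqxx.
      by rewrite H3 ?orbT.
  have yX : y \notin u |: X by rewrite -eW.
  have sYW : y |: Y \subset y |: W by apply: setUS.
  have vW' : v \in y |: W by rewrite inE vW orbT.
  have vY' : v \notin y |: Y.
    by rewrite !inE (negbTE vY) orbF; apply/eqP => vy; move: yW; rewrite -vy vW.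
  have eW' : y |: W = y |: (u |: X) by rewrite eW.
  have := IH By (u |: X) (y |: Y) y (y |: W) gy yX eW' sYW vW' vY'.
  rewrite cX setC_U1 => H.
  have yY : y \notin Y by apply: contra yW; apply: (subsetP YW).
  have Hs := swap_count g uX yY.
  rewrite -/By in Hs.
  rewrite mulnCA H mulnA mulnA [#|~: X| * _]mulnC Hs.
  by rewrite -!mulnA [d y * (d v * _)]mulnCA.
by rewrite -big_distrr.

Qed.
End Walk.

Section Tail.
Variables (n : nat) (d : 'I_n -> nat) (v : 'I_n).
Notation FT := {ffun 'I_n -> 'I_n}.

Lemma wc_of j (f : FT) : forall u (W : {set 'I_n}), iter j.+1 f u = v ->
  (forall i, 0 < i <= j -> iter i f u \notin W) ->
  (forall i i', i' < i <= j -> iter i f u != iter i' f u) -> wc v j f u W.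
Proof.
elim: j => [|j IH] u W Hv HW Hd /=; first by rewrite -Hv.
apply/andP; split; first by apply: (HW 1).
apply: IH.
- by rewrite -iterSr.
- move=> i /andP[i0 ij]; rewrite inE negb_or -!iterSr; apply/andP; split.
    by rewrite in_set1; apply: (Hd i.+1 1 _); lia.
  by apply: HW; lia.
- move=> i i' /andP[ii' ij]; rewrite -!iterSr; apply: Hd; lia.
Qed.

Lemma tail0_wc (f : FT) : tail_len f v == 0 -> exists2 j, j < n & wc v j f v [set v].
Proof.
rewrite /tail_len /six_len.
set t := find _ _.
rewrite /= .
case: ifP => [/eqP Hs _|//].
have ex : exists k, (0 < k) && (iter k f v == v) by exists t.+1; rewrite /= -Hs eqxx.
case: (ex_minnP ex) => k /andP[k0 /eqP Hk] Hmin.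
have Hdist : forall i i', i' < i < k -> iter i f v != iter i' f v.
  move=> i i' /andP[ii' ik]; apply/eqP => E.
  have : k <= k - i + i'.
    apply: Hmin; rewrite addn_gt0 subn_gt0 ik /=.
    by rewrite iterD -E -iterD subnK ?Hk // ltnW.
  lia.
have kn : k <= n.
  have inj : injective (fun i : 'I_k => iter i f v).
    move=> i i' /eqP E; apply/val_inj/eqP; apply: contraTT E => ne.
    case: (ltngtP i i') => [lt|gt|/eqP]; last by rewrite (negbTE ne).
      by rewrite eq_sym Hdist // lt ltn_ord.
    by rewrite Hdist // gt ltn_ord.
  by have := @leq_card _ _ _ inj; rewrite !card_ord.
exists k.-1; first by lia.
apply: wc_of; first by rewrite prednK.
- move=> i /andP[i0 ik]; rewrite inE; apply: Hdist (i) 0 _.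
  by rewrite i0 /=; lia.
- move=> i i' /andP[ii' ik]; apply: Hdist; rewrite ii' /=; lia.
Qed.

Lemma count_tail :
  #|[pred f : FT | has_degrees d f && (tail_len f v == 0)]| <=
  \sum_(j < n) #|[pred f : FT | has_degrees d f && wc v j f v [set v]]|.
Proof.
under eq_bigr do rewrite cardP_sum.
rewrite exchange_big /= cardP_sum; apply: leq_sum => f _.
case: (has_degrees d f) => //=.
case t0: (tail_len f v == 0) => //.
case: (tail0_wc t0) => j jn wj.
by rewrite (bigD1 (Ordinal jn)) //= wj.
Qed.

Lemma count_cyc j :
  #|[pred f : FT | has_degrees d f && wc v j f v [set v]]| * n ^_ j.+1 =
  #|[pred f : FT | has_degrees d f]| * d v * Tw d j (~: [set v]).
Proof.
have g : good d (has_degrees d) set0 set0.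
  split => //; first by move=> f x x' _ _; apply: swf_deg.
  by move=> f x _; rewrite inE.
have := @walk_count n d v j _ set0 set0 v [set v] g.
rewrite setC0 cardsT card_ord => -> //.
- by rewrite inE.
- by rewrite setU0.
- by rewrite sub0set.
- by rewrite inE.
- by rewrite inE.
Qed.
End Tail.

Section NatFacts.
Variables (n : nat) (d : 'I_n -> nat).
Hypothesis hd : is_degree_seq d.
Local Notation Dl := (Delta_max d).

Lemma sumT (F : 'I_n -> nat) : \sum_(x in [set: 'I_n]) F x = \sum_(x < n) F x.
Proof. by apply: eq_bigl => x; rewrite inE. Qed.

Lemma Dw_T : Dw d [set: 'I_n] = n.
Proof. by rewrite /Dw sumT hd. Qed.

Lemma d_le_D x : d x <= Dl.
Proof. exact: leq_bigmax. Qed.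

Lemma D_ge1 : 0 < n -> 0 < Dl.
Proof.
move=> n0; have : n <= n * Dl.
  rewrite -{1}hd -[n in n * _]card_ord -sum1_card big_distrl /= .
  by apply: leq_sum => x _; rewrite mul1n d_le_D.
by case: Dl => //; rewrite muln0; lia.
Qed.

Lemma sq_le : \sum_(x < n) d x ^ 2 <= Dl * n.
Proof.
rewrite [X in _ <= X](_ : Dl * n = \sum_(x < n) Dl * d x); last by rewrite -big_distrr /= hd.
apply: leq_sum => x _.
by rewrite expnS expn1 leq_mul2r d_le_D orbT.
Qed.

Lemma T_dec k : Tw d k.+1 [set: 'I_n] + k * Tw d k [set: 'I_n] <= n * Tw d k [set: 'I_n].
Proof.
case: k => [|k]; first by rewrite mul0n addn0 TwS Tw0 muln1; under eq_bigr do rewrite Tw0 muln1; rewrite sumT hd.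
have E : n * Tw d k.+1 [set: 'I_n] = Dw d [set: 'I_n] * Tw d k.+1 [set: 'I_n] by rewrite Dw_T.
rewrite E -Tw_R1 leq_add2l leq_mul2l; apply/orP; right.
rewrite TwS; apply: leq_sum => x _; rewrite leq_mul2r expnS expn1; apply/orP; right.
case: (d x) => // m; exact: leq_pmulr.
Qed.

Definition Vs k := \sum_(x < n) (d x ^ 2 - d x) * Tw d k ([set: 'I_n] :\ x).
Definition Ws := \sum_(x < n) (d x ^ 2 - d x).

Lemma T_R1' k : Tw d k.+2 [set: 'I_n] + k.+1 * (Tw d k.+1 [set: 'I_n] + Vs k) =
   n * Tw d k.+1 [set: 'I_n].
Proof.
have E : n * Tw d k.+1 [set: 'I_n] = Dw d [set: 'I_n] * Tw d k.+1 [set: 'I_n] by rewrite Dw_T.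
rewrite E -Tw_R1; congr (_ + _ * _).
rewrite TwS /Vs !sumT -big_split /=; apply: eq_bigr => x _.
rewrite -mulnDl; congr (_ * _); rewrite subnKC // expnS expn1.
by case: (d x) => // m; rewrite leq_pmulr.
Qed.

Lemma T_R2' k : Ws * Tw d k.+1 [set: 'I_n] <= Vs k * (n + k.+1 * Dl).
Proof.
rewrite /Ws /Vs !big_distrl /=; apply: leq_sum => x _.
rewrite -mulnA leq_mul2l; apply/orP; right.
apply: leq_trans (Tw_R2 _ _ (_ : x \in [set: 'I_n])) _; first by rewrite inE.
by rewrite Dw_T leq_mul2l leq_add2l leq_mul2l d_le_D !orbT.
Qed.

Lemma Ws_eq : Ws + n = \sum_(x < n) d x ^ 2.
Proof.
rewrite [X in _ + X = _](_ : n = \sum_(x < n) d x) // /Ws -big_split /=; apply: eq_bigr => x _.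
rewrite subnK // expnS expn1; case: (d x) => // m; by rewrite leq_pmull.
Qed.

Lemma T_v j (v : 'I_n) : Tw d j (~: [set v]) <= Tw d j [set: 'I_n].
Proof.
rewrite (_ : ~: [set v] = [set: 'I_n] :\ v); first exact: Tw_mono.
by apply/setP => z; rewrite !inE andbT.
Qed.

End NatFacts.

Unset Implicit Arguments.
Section Part6Sec.
Local Open Scope R_scope.

Fixpoint sumR (f : nat -> R) (m : nat) : R :=
  match m with O => 0 | S m' => sumR f m' + f m' end.

Lemma sumR_le f g m : (forall k, (k < m)%coq_nat -> f k <= g k) -> sumR f m <= sumR g m.
Proof.
induction m as [|m IH]; simpl; intros H; [lra|].
assert (f m <= g m) by (apply H; lia).
assert (sumR f m <= sumR g m) by (apply IH; intros; apply H; lia). lra.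
Qed.

Lemma sumR_const c m : sumR (fun _ => c) m = INR m * c.
Proof. induction m as [|m IH]; simpl sumR; [simpl; lra|]. rewrite IH S_INR; ring. Qed.

Lemma sumR_split f a b : sumR f (a + b)%coq_nat = sumR f a + sumR (fun k => f (a + k)%coq_nat) b.
Proof.
induction b as [|b IH]; simpl; [rewrite Nat.add_0_r; lra|].
rewrite Nat.add_succ_r; simpl; rewrite IH; lra.
Qed.

Section Bound.
Variables (N K : nat) (s : R) (q : nat -> R).
Hypotheses (HK2 : (2 <= K)%coq_nat) (HKN : (2 * K <= N)%coq_nat) (Hs : 0 <= s)
  (Hq0 : q O = 1) (Hqp : forall k, 0 <= q k)
  (Hdec : forall k, (k < N)%coq_nat -> q (S k) <= q k)
  (Hstep : forall j, (1 <= j)%coq_nat -> (j < K)%coq_nat -> q (S j) <= q j * (1 - INR j * (s / (2 * INR N)))).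

Let c := s / (4 * INR N).

Lemma HN : 0 < INR N.
Proof. apply lt_0_INR; lia. Qed.

Lemma q_exp j : (j <= K)%coq_nat -> q j <= exp (- (c * INR j * (INR j - 1))).
Proof.
induction j as [|j IH]; intros Hj.
- rewrite Hq0; simpl; replace (- (c * 0 * (0 - 1))) with 0 by ring; rewrite exp_0; lra.
- destruct j as [|j].
  + simpl. replace (- (c * 1 * (1 - 1))) with 0 by ring; rewrite exp_0.
    pose proof (Hdec O ltac:(lia)); lra.
  + assert (IH' := IH ltac:(lia)).
    pose proof (Hstep (S j) ltac:(lia) ltac:(lia)) as St.
    pose proof (exp_ineq1_le (- (INR (S j) * (s / (2 * INR N))))) as E.
    pose proof (Hqp (S j)) as P.
    assert (q (S (S j)) <= q (S j) * exp (- (INR (S j) * (s / (2 * INR N))))).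
    { eapply Rle_trans; [exact St|]. apply Rmult_le_compat_l; lra. }
    eapply Rle_trans; [exact H|].
    eapply Rle_trans.
    { apply Rmult_le_compat_r; [left; apply exp_pos| exact IH']. }
    rewrite -exp_plus. right; f_equal.
    unfold c. pose proof HN. rewrite (S_INR (S j)). field. lra.
Qed.

Lemma q_mono k : (K <= k)%coq_nat -> (k < N)%coq_nat -> q k <= q K.
Proof.
induction k as [|k IH]; intros H1 H2; [replace K with O by lia; lra|].
destruct (Nat.eq_dec K (S k)) as [->|ne]; [lra|].
pose proof (Hdec k ltac:(lia)). pose proof (IH ltac:(lia) ltac:(lia)). lra.
Qed.

Lemma q_le1 k : (k <= N)%coq_nat -> q k <= 1.
Proof.
induction k as [|k IH]; intros H; [lra|].
pose proof (Hdec k ltac:(lia)). pose proof (IH ltac:(lia)). lra.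
Qed.

Lemma final_bound :
  sumR (fun k => q k / (INR N - INR k)) N <=
  2 * INR K / INR N + INR N * exp (- (c * INR K * (INR K - 1))).
Proof.
pose proof HN as HN.
replace N with (Nat.add K (Nat.sub N K)) at 1 by lia.
rewrite sumR_split.
assert (A : sumR (fun k => q k / (INR N - INR k)) K <= sumR (fun _ => 2 / INR N) K).
{ apply sumR_le. intros k Hk.
  assert (Hk' : (2 * k <= N)%coq_nat) by lia.
  apply le_INR in Hk'. rewrite mult_INR in Hk'. simpl in Hk'.
  pose proof (q_le1 k ltac:(lia)). pose proof (Hqp k).
  apply Rle_trans with (1 / (INR N - INR k)).
  - unfold Rdiv. apply Rmult_le_compat_r; [|lra].
    left; apply Rinv_0_lt_compat; lra.
  - unfold Rdiv; rewrite Rmult_1_l.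
    apply Rle_trans with (/ (INR N / 2)); [apply Rinv_le_contravar; lra|].
    right; field; lra. }
assert (B : sumR (fun k => q (K + k)%coq_nat / (INR N - INR (K + k)%coq_nat)) (Nat.sub N K)
            <= sumR (fun _ => q K) (Nat.sub N K)).
{ apply sumR_le. intros k Hk.
  assert (Hk' : (K + k + 1 <= N)%coq_nat) by lia.
  apply le_INR in Hk'. rewrite !plus_INR in Hk'. simpl in Hk'.
  pose proof (q_mono (K + k)%coq_nat ltac:(lia) ltac:(lia)). pose proof (Hqp (K + k)%coq_nat).
  rewrite plus_INR.
  apply Rle_trans with (q (K + k)%coq_nat / 1); [|lra].
  unfold Rdiv. apply Rmult_le_compat_l; [lra|].
  apply Rinv_le_contravar; lra. }
rewrite !sumR_const in A B.
pose proof (q_exp K ltac:(lia)).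
assert (INR (Nat.sub N K) <= INR N) by (apply le_INR; lia).
pose proof (pos_INR (Nat.sub N K)%coq_nat). pose proof (Hqp K).
assert (INR (Nat.sub N K) * q K <= INR N * exp (- (c * INR K * (INR K - 1)))).
{ apply Rle_trans with (INR N * q K); [apply Rmult_le_compat_r; lra|].
  apply Rmult_le_compat_l; lra. }
replace (2 * INR K / INR N) with (INR K * (2 / INR N)) by (field; lra).
lra.
Qed.
End Bound.

End Part6Sec.
Set Implicit Arguments.

Section Part7All.
Local Open Scope R_scope.


Lemma INR_addn (a b : nat) : INR (a + b)%nat = (INR a + INR b).
Proof. by rewrite addnE plus_INR. Qed.
Lemma INR_muln (a b : nat) : INR (a * b)%nat = (INR a * INR b).
Proof. by rewrite mulnE mult_INR. Qed.
Lemma INR_subn (a b : nat) : (b <= a)%nat -> INR (a - b)%nat = (INR a - INR b).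
Proof. by move=> h; rewrite subnE minus_INR //; apply/leP. Qed.
Lemma INR_leq (a b : nat) : (a <= b)%nat -> (INR a <= INR b).
Proof. by move=> h; apply: le_INR; apply/leP. Qed.

Lemma INR_sum (F : nat -> nat) m :
  INR (\sum_(j < m) F j) = sumR (fun j => INR (F j)) m.
Proof.
elim: m => [|m IH]; first by rewrite big_ord0.
by rewrite big_ord_recr /= INR_addn IH.
Qed.

Lemma sumR_scale r f m : sumR (fun k => (r * f k)) m = (r * sumR f m).
Proof. elim: m => [|m IH] /=; [lra| rewrite IH; lra]. Qed.

Lemma sumR_nonneg f m : (forall k, (k < m)%nat -> (0 <= f k)) -> (0 <= sumR f m).
Proof.
elim: m => [|m IH] H /=; first lra.
have := H m (ltnSn m); have := IH (fun k hk => H k (ltnW hk)); lra.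
Qed.

Local Open Scope R_scope.

Lemma div_nonneg a b : 0 <= a -> 0 < b -> 0 <= a / b.
Proof. move=> ha hb; rewrite /Rdiv; apply: Rmult_le_pos => //; left; exact: Rinv_0_lt_compat. Qed.

Section Conn.
Variables (n : nat) (d : 'I_n -> nat) (v : 'I_n).
Hypothesis hd : is_degree_seq d.
Hypothesis n0 : (0 < n)%nat.
Local Notation Dl := (Delta_max d).

Definition qq k := INR (Tw d k [set: 'I_n]) / INR (n ^_ k).

Lemma ff_pos k : (k <= n)%nat -> 0 < INR (n ^_ k).
Proof. by move=> h; apply: lt_0_INR; apply/ltP; rewrite ffact_gt0. Qed.

Lemma ffS k : (k < n)%nat -> INR (n ^_ k.+1) = INR (n ^_ k) * (INR n - INR k).
Proof. by move=> h; rewrite ffactnSr INR_muln INR_subn // ltnW. Qed.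

Lemma qq0 : qq 0 = 1.
Proof. by rewrite /qq Tw0 ffactn0 /=; field. Qed.

Lemma qq_pos k : 0 <= qq k.
Proof.
rewrite /qq; have := pos_INR (Tw d k [set: 'I_n]); have := pos_INR (n ^_ k).
case: (leqP k n) => h.
  have := ff_pos h => *; apply: div_nonneg; lra.
by rewrite ffact_small // /= Rdiv_0_r; lra.
Qed.

Lemma qq_dec k : (k < n)%nat -> qq k.+1 <= qq k.
Proof.
move=> kn; rewrite /qq ffS //.
have F := ff_pos (ltnW kn).
have := T_dec hd k; move/INR_leq; rewrite !INR_addn !INR_muln => H.
have nk : 0 < INR n - INR k by have := lt_INR _ _ (elimT ltP kn); lra.
have T0p := pos_INR (Tw d k [set: 'I_n]).

set T1 := INR (Tw d k.+1 _) in H *; set T0 := INR (Tw d k _) in H T0p *.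
set F0 := INR (n ^_ k) in F *.
apply: (Rmult_le_reg_r (F0 * (INR n - INR k))); first by apply: Rmult_lt_0_compat.
have -> : T1 / (F0 * (INR n - INR k)) * (F0 * (INR n - INR k)) = T1 by field; lra.
have -> : T0 / F0 * (F0 * (INR n - INR k)) = INR n * T0 - INR k * T0 by field; lra.
lra.
Qed.

Definition sg := sigma_sq d.

Lemma pow2E (a : nat) : Nat.pow a 2 = expn a 2.
Proof. by rewrite /= Nat.mul_1_r expnS expn1 mulnE. Qed.

Lemma Ws_R : INR (Ws d) = INR n * sg.
Proof.
have := Ws_eq hd; move/(f_equal INR); rewrite INR_addn => E.
rewrite /sg /sigma_sq (eq_bigr (fun x => expn (d x) 2)); last by move=> x _; rewrite pow2E.
rewrite -E.
have : 0 < INR n by apply: lt_0_INR; apply/ltP.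
move=> *; field; lra.
Qed.

Lemma sg_nonneg : 0 <= sg.
Proof.
have := Ws_R; have := pos_INR (Ws d); have : 0 < INR n by apply: lt_0_INR; apply/ltP.
move=> H1 H2 H3; nra.
Qed.

Lemma qq_step k : (k.+1 < n)%nat -> (k.+1 * Dl <= n)%nat ->
  qq k.+2 <= qq k.+1 * (1 - INR k.+1 * (sg / (2 * INR n))).
Proof.
move=> kn kD.
have Hn : 0 < INR n by apply: lt_0_INR; apply/ltP.
have R1 := T_R1' hd k; move/(f_equal INR): R1; rewrite !INR_addn !INR_muln INR_addn => R1.
have R2 := T_R2' hd k; move/INR_leq: R2; rewrite !INR_muln INR_addn INR_muln Ws_R => R2.
move/INR_leq: kD; rewrite INR_muln => kD.
set t1 := INR (Tw d k.+1 _) in R1 R2 *; set t2 := INR (Tw d k.+2 _) in R1 *.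
set V := INR (Vs d k) in R1 R2; set j := INR k.+1 in R1 R2 kD *.
set D := INR Dl in R2 kD.
have t1p : 0 <= t1 by apply: pos_INR.
have Vp : 0 <= V by apply: pos_INR.
have jp : 0 < j by apply: lt_0_INR; apply/ltP.
have sp := sg_nonneg.
have jn : j < INR n by apply: lt_INR; apply/ltP.
have HV : sg * t1 <= 2 * V.
  have : INR n * sg * t1 <= V * (2 * INR n) by nra.
  nra.
have E1 : t2 = INR n * t1 - j * t1 - j * V by rewrite /j S_INR; nra.
have HV' := Rmult_le_compat_l j _ _ (Rlt_le _ _ jp) HV.
have Ht2 : t2 <= (INR n - j) * t1 - j * sg * t1 / 2 by nra.
rewrite /qq ffS // -/t1 -/t2.
have F := ff_pos (ltnW kn).
set F1 := INR (n ^_ k.+1) in F *.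
have nj : 0 < INR n - j by lra.
have Ht2' : t2 <= (INR n - j) * (t1 * (1 - j * (sg / (2 * INR n)))).
  have : j * sg * t1 * j <= j * sg * t1 * INR n.
    apply: Rmult_le_compat_l; [|lra]; apply: Rmult_le_pos; [|lra]; apply: Rmult_le_pos; lra.
  move=> H.
  have E : (INR n - j) * (t1 * (1 - j * (sg / (2 * INR n)))) =
           (INR n - j) * t1 - j * sg * t1 / 2 + j * sg * t1 * j / (2 * INR n).
    field; lra.
  rewrite E.
  have : 0 <= j * sg * t1 * j / (2 * INR n).
    apply: div_nonneg; last lra.
    apply: Rmult_le_pos; [|lra]; apply: Rmult_le_pos; [|lra]; apply: Rmult_le_pos; lra.
  lra.
apply: (Rmult_le_reg_r (F1 * (INR n - j))); first by apply: Rmult_lt_0_compat.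
have -> : t2 / (F1 * (INR n - j)) * (F1 * (INR n - j)) = t2 by field; lra.
have -> : t1 / F1 * (1 - j * (sg / (2 * INR n))) * (F1 * (INR n - j)) =
          (INR n - j) * (t1 * (1 - j * (sg / (2 * INR n)))) by field; lra.
exact: Ht2'.
Qed.

Lemma RHS_nonneg : 0 <= INR Dl * sumR (fun k => qq k / (INR n - INR k)) n.
Proof.
apply: Rmult_le_pos; first exact: pos_INR.
apply: sumR_nonneg => k kn; apply: div_nonneg; first exact: qq_pos.
have := lt_INR _ _ (elimT ltP kn); lra.
Qed.

Lemma prob_bound : prob_tail0 d v <= INR Dl * sumR (fun k => qq k / (INR n - INR k)) n.
Proof.
rewrite /prob_tail0.
set a := #|[pred f : {ffun 'I_n -> 'I_n} | has_degrees d f]|.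
set t := #|[pred f : {ffun 'I_n -> 'I_n} | has_degrees d f && (tail_len f v == 0%nat)]|.
set X := INR Dl * _.
have ta : (t <= a)%nat.
  by apply: subset_leq_card; apply/subsetP => f; rewrite !inE => /andP[].
have Xp : 0 <= X by exact: RHS_nonneg.
case: (posnP a) => [a0|apos].
  move: ta; rewrite a0 leqn0 => /eqP ->; rewrite /= /Rdiv Rmult_0_l; lra.
have Ha : 0 < INR a by apply: lt_0_INR; apply/ltP.
have Hc : forall j, (j < n)%nat ->
    INR #|[pred f : {ffun 'I_n -> 'I_n} | has_degrees d f && wc v j f v [set v]]|
    <= INR a * (INR Dl * (qq j / (INR n - INR j))).
  move=> j jn.
  have C := count_cyc d v j; move/(f_equal INR): C.
  rewrite [LHS]INR_muln ffS // [RHS]INR_muln [in RHS]INR_muln -/a => C.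
  have F := ff_pos (ltnW jn).
  have nj : 0 < INR n - INR j by have := lt_INR _ _ (elimT ltP jn); lra.
  have Hd : INR (d v) <= INR Dl by apply: INR_leq; apply: d_le_D.
  have HT : INR (Tw d j (~: [set v])) <= INR (Tw d j [set: 'I_n]) by apply: INR_leq; apply: T_v.
  have T0 := pos_INR (Tw d j (~: [set v])).
  set c := INR #|_| in C *.
  rewrite /qq.
  set F0 := INR (n ^_ j) in C F *.
  set Ta := INR (Tw d j (~: _)) in C HT T0; set Tb := INR (Tw d j _) in HT *.
  apply: (Rmult_le_reg_r (F0 * (INR n - INR j))); first by apply: Rmult_lt_0_compat.
  rewrite C.
  have -> : INR a * (INR Dl * (Tb / F0 / (INR n - INR j))) * (F0 * (INR n - INR j))
            = INR a * INR Dl * Tb by field; lra.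
  apply: Rmult_le_compat; try lra.
  - apply: Rmult_le_pos; [lra| exact: pos_INR].
  - apply: Rmult_le_compat_l; lra.
have St : INR t <= INR a * X.
  apply: Rle_trans (INR_leq (count_tail d v)) _.
  rewrite (INR_sum (fun j => #|[pred f : {ffun 'I_n -> 'I_n} | has_degrees d f && wc v j f v [set v]]|)).
  rewrite /X -sumR_scale -sumR_scale.
  apply: sumR_le => k kn; apply: Hc; exact/ltP.
apply: (Rmult_le_reg_r (INR a)) => //.
have -> : INR t / INR a * INR a = INR t by field; lra.
lra.
Qed.

End Conn.
End Part7All.

Section Final.
Local Open Scope R_scope.

Lemma floor_ex x : 0 <= x -> exists K : nat, INR K <= x /\ x < INR K + 1.
Proof.
move=> x0; have [H1 H2] := archimed x.
have z0 : (0 < up x)%Z by apply: lt_IZR; simpl; lra.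
exists (Z.to_nat (up x - 1)).
rewrite INR_IZR_INZ Z2Nat.id; last by lia.
rewrite minus_IZR; simpl; lra.
Qed.

Lemma exp_le x y : x <= y -> exp x <= exp y.
Proof. by case => [h|->]; [left; apply: exp_increasing | right]. Qed.

Lemma ratio_nonneg (a b : nat) : 0 <= INR a / INR b.
Proof.
have := pos_INR a; case: (posnP b) => [->|b0] /= ha.
  rewrite /Rdiv Rinv_0; lra.
apply: div_nonneg => //; apply: lt_0_INR; exact/ltP.
Qed.

Lemma instance_bound (n : nat) (d : 'I_n -> nat) (v : 'I_n) (L : R) :
  is_degree_seq d -> (0 < n)%nat -> 2 <= L -> L = ln (INR n) ->
  (INR (Delta_max d))^2 * L^3 <= INR n * sigma_sq d / 64 ->
  prob_tail0 d v <= 2 / L + 1 / INR n.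
Proof.
move=> hd n0 L2 eL HD.
set Nr := INR n in HD eL *.
set Dl := INR (Delta_max d) in HD *.
set s := sigma_sq d in HD *.
have HN : 0 < Nr by apply: lt_0_INR; exact/ltP.
have HNn : 0 < INR n by exact: HN.
have D1 : 1 <= Dl by rewrite /Dl; apply: (INR_leq (D_ge1 hd n0)).
have sD : s <= Dl.
  have := sq_le hd; move/INR_leq; rewrite INR_muln => H.
  rewrite /s /sigma_sq (eq_bigr (fun x => expn (d x) 2)); last by move=> x _; rewrite pow2E.
  apply: (Rmult_le_reg_r Nr) => //.
  have -> : (INR (\sum_(x < n) expn (d x) 2) / INR n - 1) * Nr =
            INR (\sum_(x < n) expn (d x) 2) - Nr by rewrite /Nr; field; lra.
  change (INR (Delta_max d)) with Dl in H; change (INR n) with Nr in H; lra.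
have sp : 0 <= s by apply: sg_nonneg.
have L0 : 0 < L by lra.
have DL : Dl * L * 256 <= Nr.
  have H1 : Dl * Dl * (L * L * L) <= Nr * Dl / 64.
    have : Nr * s / 64 <= Nr * Dl / 64.
      apply: Rmult_le_compat_r; first lra.
      by apply: Rmult_le_compat_l; lra.
    move: HD; rewrite /= !Rmult_1_r; lra.
  have H2 : Dl * (L * L * L) <= Nr / 64.
    apply: (Rmult_le_reg_l Dl); first lra.
    have -> : Dl * (Nr / 64) = Nr * Dl / 64 by field.
    lra.
  have H3 : Dl * L * 4 <= Dl * (L * L * L).
    have : 4 <= L * L by nra.
    move=> h; have : 0 < Dl * L by nra.
    nra.
  lra.
set x := Nr / (Dl * L).
have xDL : x * (Dl * L) = Nr by rewrite /x; field; nra.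
have x256 : 256 <= x.
  apply: (Rmult_le_reg_r (Dl * L)); first nra.
  lra.
have [K [K1 K2]] := floor_ex (x := x) ltac:(lra).
have K2' : (2 <= K)%coq_nat.
  apply: INR_le; simpl; lra.
have KN : (2 * K <= n)%coq_nat.
  apply: INR_le; rewrite mult_INR; simpl; change (INR n) with Nr.
  have : x * 2 <= Nr.
    rewrite -xDL; apply: Rmult_le_compat_l; first lra; nra.
  lra.
have KD : forall j, (j < K)%coq_nat -> (j * Delta_max d <= n)%nat.
  move=> j jK; apply/leP; apply: INR_le; rewrite mult_INR -/Dl; change (INR n) with Nr.
  have : INR j <= x by have := lt_INR _ _ jK; lra.
  move=> h; rewrite -xDL.
  have : INR j * Dl <= x * Dl by apply: Rmult_le_compat_r; lra.
  have : x * Dl <= x * (Dl * L) by nra.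
  lra.
have Hdec : forall k, (k < n)%coq_nat -> qq d (S k) <= qq d k.
  by move=> k kn; apply: qq_dec => //; exact/ltP.
have Hstep : forall j, (1 <= j)%coq_nat -> (j < K)%coq_nat ->
    qq d (S j) <= qq d j * (1 - INR j * (s / (2 * INR n))).
  move=> [|k] j1 jK; first lia.
  have := @qq_step n d hd n0 k; rewrite /sg -/s; apply; [apply/ltP; lia | apply: KD; lia].
have FB := @final_bound n K s (qq d) K2' KN (qq0 d) (@qq_pos n d) Hdec Hstep.
rewrite -/Nr in FB.
have PB := prob_bound d v.
rewrite -/Nr -/Dl in PB.
set S := sumR _ _ in PB FB.
set E := exp _ in FB.
have KK : x * x / 4 <= INR K * (INR K - 1) by nra.
have sx : 64 * L * Nr <= s * (x * x).
  apply: (Rmult_le_reg_r (Dl * L * (Dl * L))); first nra.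
  have -> : s * (x * x) * (Dl * L * (Dl * L)) = s * Nr * Nr.
    by rewrite -xDL; ring.
  have : Dl * Dl * (L * L * L) * 64 <= Nr * s by move: HD; rewrite /= !Rmult_1_r; lra.
  nra.
have Eb : E <= exp (- (4 * L)).
  apply: exp_le.
  have : 4 * L <= s / (4 * Nr) * INR K * (INR K - 1).
    have -> : s / (4 * Nr) * INR K * (INR K - 1) = s / (4 * Nr) * (INR K * (INR K - 1)) by ring.
    apply: Rle_trans (_ : s / (4 * Nr) * (x * x / 4) <= _); last first.
      apply: Rmult_le_compat_l => //; apply: div_nonneg; lra.
    have -> : s / (4 * Nr) * (x * x / 4) = s * (x * x) / (16 * Nr) by field; lra.
    apply: (Rmult_le_reg_r (16 * Nr)); first lra.
    have -> : s * (x * x) / (16 * Nr) * (16 * Nr) = s * (x * x) by field; lra.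
    lra.
  lra.
have e4 : exp (- (4 * L)) * (Nr * Nr * Nr * Nr) = 1.
  have eN : exp L = Nr by rewrite eL exp_ln.
  have -> : Nr * Nr * Nr * Nr = exp (L + L + L + L) by rewrite !exp_plus eN.
  rewrite -exp_plus (_ : - (4 * L) + (L + L + L + L) = 0); [exact: exp_0 | ring].
have Ep : 0 <= E by left; apply: exp_pos.
have N1 : 1 <= Nr by have := INR_leq n0; simpl.
have Sp : 0 <= S.
  apply: sumR_nonneg => k kn; apply: div_nonneg; first exact: qq_pos.
  have := lt_INR _ _ (elimT ltP kn); change (INR n) with Nr; lra.
have B1 : Dl * (2 * INR K / Nr) <= 2 / L.
  have -> : Dl * (2 * INR K / Nr) = 2 * (INR K * Dl) / Nr by field; lra.
  have : INR K * Dl <= Nr / L.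
    have : INR K * Dl <= x * Dl by apply: Rmult_le_compat_r; lra.
    have -> : x * Dl = Nr / L by rewrite /x; field; lra.
    done.
  move=> h; apply: (Rmult_le_reg_r Nr) => //.
  have -> : 2 * (INR K * Dl) / Nr * Nr = 2 * (INR K * Dl) by field; lra.
  have -> : 2 / L * Nr = 2 * (Nr / L) by field; lra.
  lra.
have B2 : Dl * (Nr * E) <= 1 / Nr.
  have DN : Dl <= Nr by nra.
  apply: (Rmult_le_reg_r Nr) => //.
  have -> : 1 / Nr * Nr = 1 by field; lra.
  have E1 : E * (Nr * Nr * Nr * Nr) <= 1.
    rewrite -e4; apply: Rmult_le_compat_r => //; nra.
  have : Dl * (Nr * E) * Nr <= Nr * Nr * Nr * E.
    have h0 : 0 <= Nr * E * Nr by apply: Rmult_le_pos => //; nra.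
    have h : 0 <= Nr * E * Nr * (Nr - Dl) by apply: Rmult_le_pos => //; lra.
    nra.
  have : Nr * Nr * Nr * E <= E * (Nr * Nr * Nr * Nr).
    have h0 : 0 <= Nr * Nr * Nr * E by apply: Rmult_le_pos => //; nra.
    have h : 0 <= Nr * Nr * Nr * E * (Nr - 1) by apply: Rmult_le_pos => //; lra.
    nra.
  lra.
have : Dl * S <= 2 / L + 1 / Nr.
  have : Dl * S <= Dl * (2 * INR K / Nr + Nr * E) by apply: Rmult_le_compat_l; lra.
  lra.
lra.
Qed.

End Final.

Section Main.
Local Open Scope R_scope.

Lemma main_aux
  (d : forall n : nat, 'I_n.+1 -> nat) (v : forall n : nat, 'I_n.+1)
  (hdeg : forall n : nat, is_degree_seq (d n))
  (h3 : little_o (fun n => INR (Delta_max (d n)))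
                 (fun n => sqrt (Rdiv (Rmult (INR n.+1) (sigma_sq (d n)))
                                      (pow (ln (INR n.+1)) 3)))) :
  Un_cv (fun n => prob_tail0 (d n) (v n)) 0.
Proof.
move=> eps epos.
have [n1 Hn1] := h3 (1/8) ltac:(lra).
set B := Rmax 2 (4 / eps).
have [n2 Hn2] := INR_archimed 1 (exp B + 2 / eps) ltac:(lra).
exists (max n1 n2) => n nge.
have hn1 : (n1 <= n)%coq_nat by lia.
have hn2 : (n2 <= n)%coq_nat by lia.
move: (Hn1 n hn1).
set Nr := INR n.+1; set L := ln Nr; set Dl := INR (Delta_max (d n)); set s := sigma_sq (d n).
move=> H3.
have n0 : (0 < n.+1)%nat by [].
have HN : INR n2 + 1 <= Nr.
  have := S_INR n; have := le_INR _ _ hn2; rewrite -/Nr; lra.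
have e2 : 0 < 2 / eps by apply: Rdiv_lt_0_compat; lra.
have EB : exp B < Nr by lra.
have BL : B < L.
  rewrite /L -{1}(ln_exp B); apply: ln_increasing => //; exact: exp_pos.
have L2 : 2 <= L by have := Rmax_l 2 (4 / eps); rewrite -/B; lra.
have L4 : 4 / eps <= L by have := Rmax_r 2 (4 / eps); rewrite -/B; lra.
have sp : 0 <= s by apply: (sg_nonneg (hdeg n)).
have Lp : 0 < L by lra.
have Nrp : 0 < Nr by apply: lt_0_INR; lia.
have L3 : 0 < L ^ 3 by apply: pow_lt.
have yp : 0 <= Nr * s / L ^ 3 by apply: div_nonneg => //; apply: Rmult_le_pos; lra.
have Dp : 0 <= Dl by apply: pos_INR.
rewrite Rabs_pos_eq // Rabs_pos_eq in H3; last exact: sqrt_pos.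
have HD : Dl ^ 2 * L ^ 3 <= Nr * s / 64.
  have sq := sqrt_sqrt _ yp.
  have sqp := sqrt_pos (Nr * s / L ^ 3).
  have : Dl * Dl <= 1/64 * (Nr * s / L ^ 3).
    rewrite -sq; nra.
  move=> h; have -> : Nr * s / 64 = 1/64 * (Nr * s / L ^ 3) * L ^ 3 by field; lra.
  have -> : Dl ^ 2 = Dl * Dl by ring.
  apply: Rmult_le_compat_r; lra.
have IB := instance_bound (v n) (hdeg n) n0 L2 erefl HD.
have P0 : 0 <= prob_tail0 (d n) (v n) by apply: ratio_nonneg.
rewrite /Rdist Rminus_0_r Rabs_pos_eq //.
have : 2 / L <= eps / 2.
  apply: (Rmult_le_reg_r L) => //.
  have -> : 2 / L * L = 2 by field; lra.
  have : 4 / eps * eps <= L * eps by apply: Rmult_le_compat_r; lra.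
  have -> : 4 / eps * eps = 4 by field; lra.
  lra.
have : 1 / Nr < eps / 2.
  apply: (Rmult_lt_reg_r Nr) => //.
  have -> : 1 / Nr * Nr = 1 by field; lra.
  have h : 2 / eps < Nr by have := exp_pos B; lra.
  have e1 : eps / 2 * (2 / eps) = 1 by field; lra.
  have : eps / 2 * (2 / eps) < eps / 2 * Nr by apply: Rmult_lt_compat_l; lra.
  lra.
change (INR n.+1) with Nr in IB.
lra.
Qed.

End Main.


Theorem corollary3p14
  (d : forall n : nat, 'I_n.+1 -> nat) (v : forall n : nat, 'I_n.+1)
  (hdeg : forall n : nat, is_degree_seq (d n))
  (h1 : little_o (fun n => sigma_sq (d n))
                 (fun n => Rdiv (INR n.+1) (pow (ln (INR n.+1)) 3)))
  (h2 : little_omega (fun n => sigma_sq (d n))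
                     (fun n => Rdiv (ln (INR n.+1)) (Rpower (INR n.+1) (Rdiv 1 3))))
  (h3 : little_o (fun n => INR (Delta_max (d n)))
                 (fun n => sqrt (Rdiv (Rmult (INR n.+1) (sigma_sq (d n)))
                                      (pow (ln (INR n.+1)) 3)))) :
  Un_cv (fun n => prob_tail0 (d n) (v n)) 0.
Proof.
exact: (main_aux v hdeg h3).
Qed.
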